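(* Let $\mathcal M^\star\subset\mathbb R^D$ be a closed embedded submanifold with nearest-point projection $\pi^\star$, let $0<\tau<t_0$, and suppose for some $r<\mathrm{reach}(\mathcal M^\star)$ that $\hat s(x,t)=-\frac{x-\pi^\star(x)}{t}+\frac{e(x,t)}{t}$ for all $t\in[\tau,t_0]$, $x\in\mathcal T_r(\mathcal M^\star)$, with $\varepsilon:=\sup_{t\in[\tau,t_0],x\in\mathcal T_r(\mathcal M^\star)}\|e(x,t)\|$. Let $\bar X_t$ solve $\mathrm d\bar X_t=\frac12\hat s(\bar X_t,t_0-t)\,\mathrm dt$ for $t\in[0,t_0-\tau]$, set $a_0:=\frac12\operatorname{dist}^2(\bar X_0,\mathcal M^\star)$, and suppose $\sqrt{a_0}\ge\varepsilon$. Then \[\|\bar X_{t_0-\tau}-\bar X_0\|\le\operatorname{dist}(\bar X_0,\mathcal M^\star)+\mathcal O\!\Big(\varepsilon\ln\frac{t_0}{\tau}\Big).\]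
   Context: Reach: largest $r$ such that every point at distance $<r$ from $\mathcal M^\star$ has a unique nearest point. $\mathcal T_r(\mathcal M):=\{x:\operatorname{dist}(x,\mathcal M)<r\}$. *)

(* Defs.v *)
From HB Require Import structures.
From mathcomp Require Import all_boot all_order all_algebra.
From mathcomp Require Import all_classical all_reals all_analysis.
Set Implicit Arguments. Unset Strict Implicit. Unset Printing Implicit Defensive.
Import Order.TTheory GRing.Theory Num.Theory.
Import numFieldNormedType.Exports.
Local Open Scope classical_set_scope.
Local Open Scope ring_scope.

(* Euclidean norm on R^D (represented as row vectors 'rV[R]_D).  The
   topology/derivatives on 'rV_D come from the library's (equivalent) max norm. *)
Definition enorm {R : realType} {D : nat} (v : 'rV[R]_D) : R :=
  Num.sqrt (\sum_(i < D) v ord0 i ^+ 2).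

Definition dist_set {R : realType} {D : nat} (x : 'rV[R]_D) (M : set 'rV[R]_D) : R :=
  inf [set enorm (x - p) | p in M].

Definition tube {R : realType} {D : nat} (M : set 'rV[R]_D) (r : R) : set 'rV[R]_D :=
  [set x | dist_set x M < r].

Definition unique_nearest {R : realType} {D : nat} (M : set 'rV[R]_D) (r : R) : Prop :=
  forall x, dist_set x M < r ->
    exists! p, M p /\ enorm (x - p) = dist_set x M.

Definition reach {R : realType} {D : nat} (M : set 'rV[R]_D) : \bar R :=
  ereal_sup [set (r%:E)%E | r in [set r | unique_nearest M r]].

Fixpoint iter_partial {R : realType} {D m : nat} (s : seq 'I_D)
    (f : 'rV[R]_D -> 'rV[R]_m) : 'rV[R]_D -> 'rV[R]_m :=
  match s with
  | [::] => f
  | i :: s' => fun x => derive (iter_partial s' f) x (delta_mx 0 i)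
  end.

Definition smooth_on {R : realType} {D m : nat} (U : set 'rV[R]_D)
    (f : 'rV[R]_D -> 'rV[R]_m) : Prop :=
  forall s : seq 'I_D,
    (forall x, U x -> {for x, continuous (iter_partial s f)}) /\
    (forall (i : 'I_D) x, U x -> derivable (iter_partial s f) x (delta_mx 0 i)).

Definition embedded_submanifold {R : realType} {D : nat} (M : set 'rV[R]_D) : Prop :=
  exists d : nat, (d <= D)%N /\
    forall p, M p ->
      exists (U : set 'rV[R]_D) (F : 'rV[R]_D -> 'rV[R]_(D - d)),
        [/\ open U, U p, smooth_on U F,
            (forall x, U x -> forall w, exists v, derive F x v = w) &
            (forall x, U x -> (M x <-> F x = 0))].

(* Main.v *)
Require Import Defs.
From HB Require Import structures.
From mathcomp Require Import all_boot all_order all_algebra.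
From mathcomp Require Import all_classical all_reals all_analysis.
Import Order.TTheory GRing.Theory Num.Theory.
Import numFieldNormedType.Exports.
Local Open Scope classical_set_scope.
Local Open Scope ring_scope.

Set Implicit Arguments.
From mathcomp Require Import ring lra.
From mathcomp Require Import ring lra.

Section Dini.
Context {R : realType}.

Lemma dini_step (a b d : R) (f : R -> R) :
  a <= b -> 0 < d ->
  (forall t, a < t <= b -> forall eta, 0 < eta -> exists2 rho, 0 < rho &
     forall u, a <= u < t -> t - u < rho -> f t <= f u + eta) ->
  (forall eta, 0 < eta -> exists2 rho, 0 < rho &
     forall u, a <= u <= b -> u - a < rho -> f u <= f a + eta) ->
  (forall t, a < t < b ->
     (forall u, a <= u <= t -> f u <= f a + d * (u - a) + d) ->
     exists2 rho, 0 < rho & forall h, 0 < h < rho -> f (t + h) <= f t + d * h) ->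
  forall u, a <= u <= b -> f u <= f a + d * (u - a) + d.
Proof.
move=> ab d0 Hl Ha Hd.
pose P t := forall u, a <= u <= t -> f u <= f a + d * (u - a) + d.
pose S := [set t | a <= t <= b /\ P t].
have Pa : P a.
  move=> u /andP[h1 h2]; have -> : u = a by apply/eqP; rewrite eq_le h1 h2.
  rewrite subrr mulr0 addr0; lra.
have hS : has_sup S.
  split; first by exists a; split => //; rewrite lexx ab.
  by exists b => t [/andP[_ ->]].
set s := sup S.
have as_ : a <= s by apply: sup_upper_bound => //; split => //; rewrite lexx ab.
have sb : s <= b by apply: sup_le_ub; [case: hS | move=> t [/andP[_ ->]]].
have Pleft : forall u, a <= u < s -> f u <= f a + d * (u - a) + d.
  move=> u /andP[au us].
  have [t [/andP[a_t tb] Pt] ht] : exists2 t, S t & s - (s - u) < t.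
    by apply: sup_adherent => //; rewrite subr_gt0.
  apply: Pt; rewrite au /=; move: ht; rewrite opprB addrCA subrr addr0 => ht.
  exact: ltW.
have Ps : P s.
  move=> u /andP[au us].
  case: (ltrP u s) => [lus|]; first by apply: Pleft; rewrite au lus.
  move=> su; have -> : u = s by apply/eqP; rewrite eq_le us su.
  case: (ltrP a s) => [las|sa]; last first.
    have -> : s = a by apply/eqP; rewrite eq_le sa as_.
    rewrite subrr mulr0 addr0; lra.
  apply/ler_addgt0Pr => eta eta0.
  have [rho rho0 Hr] := Hl s ltac:(by rewrite las sb) eta eta0.
  pose u' := Num.max a (s - rho / 2).
  have au' : a <= u' by rewrite le_max lexx.
  have u's : u' < s by rewrite gt_max las /=; lra.
  have su' : s - u' < rho.
    have : s - rho / 2 <= u' by rewrite le_max lexx orbT.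
    lra.
  have := Hr u' ltac:(by rewrite au' u's) su'.
  have := Pleft u' ltac:(by rewrite au' u's).
  have : d * (u' - a) <= d * (s - a) by rewrite ler_pM2l //; lra.
  lra.
have sEb : s = b.
  apply/eqP; rewrite eq_le sb /=; rewrite leNgt; apply/negP => lsb.
  case: (ltrP a s) => [las|sa].
    have [rho rho0 Hr] := Hd s ltac:(by rewrite las lsb) Ps.
    pose t := Num.min b (s + rho / 2).
    have st : s < t by rewrite lt_min lsb /=; lra.
    have tb : t <= b by rewrite ge_min lexx.
    have tr : t <= s + rho / 2 by rewrite ge_min lexx orbT.
    have St : S t.
      split; first by rewrite tb andbT; lra.
      move=> u /andP[au ut].
      case: (lerP u s) => [us|su]; first by apply: Ps; rewrite au us.
      have := Hr (u - s) ltac:(apply/andP; split; lra).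
      rewrite addrCA subrr addr0.
      have := Ps s ltac:(by rewrite as_ lexx).
      have -> : d * (u - a) = d * (s - a) + d * (u - s) by rewrite -mulrDr; congr (_ * _); lra.
      lra.
    have := sup_upper_bound hS St; rewrite -/s; lra.
  have sa' : s = a by apply/eqP; rewrite eq_le sa as_.
  have [rho rho0 Hr] := Ha d d0.
  pose t := Num.min b (a + rho / 2).
  have st : a < t by rewrite lt_min; apply/andP; split; lra.
  have tb : t <= b by rewrite ge_min lexx.
  have tr : t <= a + rho / 2 by rewrite ge_min lexx orbT.
  have St : S t.
    split; first by rewrite tb andbT; lra.
    move=> u /andP[au ut].
    have := Hr u ltac:(apply/andP; split; lra) ltac:(lra).
    have : 0 <= d * (u - a) by apply: mulr_ge0; lra.
    lra.
  have := sup_upper_bound hS St; rewrite -/s; lra.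
by rewrite -sEb.
Qed.

Lemma dini_mono (a b d0 : R) (f : R -> R) :
  a <= b -> 0 < d0 ->
  (forall t, a < t <= b -> forall eta, 0 < eta -> exists2 rho, 0 < rho &
     forall u, a <= u < t -> t - u < rho -> f t <= f u + eta) ->
  (forall eta, 0 < eta -> exists2 rho, 0 < rho &
     forall u, a <= u <= b -> u - a < rho -> f u <= f a + eta) ->
  (forall d, 0 < d -> d < d0 -> forall t, a < t < b ->
     (forall u, a <= u <= t -> f u <= f a + d * (u - a) + d) ->
     exists2 rho, 0 < rho & forall h, 0 < h < rho -> f (t + h) <= f t + d * h) ->
  forall u, a <= u <= b -> f u <= f a.
Proof.
move=> ab d00 Hl Ha Hd u /andP[au ub].
apply/ler_addgt0Pr => e e0.
pose d := Num.min (d0 / 2) (e / (b - a + 1)).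
have dpos : 0 < d by rewrite lt_min; apply/andP; split; [lra | apply: divr_gt0; lra].
have dd0 : d < d0 by rewrite gt_min; apply/orP; left; lra.
have := @dini_step a b d f ab dpos Hl Ha (Hd d dpos dd0) u ltac:(by rewrite au ub).
have : d * (b - a + 1) <= e.
  by rewrite -ler_pdivlMr; [rewrite ge_min lexx orbT | lra].
have : d * (u - a) <= d * (b - a) by rewrite ler_pM2l //; lra.
have -> : d * (b - a + 1) = d * (b - a) + d by rewrite mulrDr mulr1.
lra.
Qed.
End Dini.

Section Enorm.
Context {R : realType} {D : nat}.
Implicit Types u v : 'rV[R]_D.

Lemma sq_ge0 v : 0 <= \sum_(i < D) v ord0 i ^+ 2.
Proof. by apply: sumr_ge0 => i _; apply: sqr_ge0. Qed.

Lemma enorm_ge0 v : 0 <= enorm v.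
Proof. exact: sqrtr_ge0. Qed.

Lemma enorm_sq v : enorm v ^+ 2 = \sum_(i < D) v ord0 i ^+ 2.
Proof. by rewrite /enorm sqr_sqrtr // sq_ge0. Qed.

Lemma enormZ c v : enorm (c *: v) = `|c| * enorm v.
Proof.
rewrite /enorm.
have -> : \sum_(i < D) (c *: v) ord0 i ^+ 2 = c ^+ 2 * \sum_(i < D) v ord0 i ^+ 2.
  by rewrite mulr_sumr; apply: eq_bigr => i _; rewrite mxE exprMn.
by rewrite sqrtrM ?sqr_ge0 // sqrtr_sqr.
Qed.

Lemma enormN v : enorm (- v) = enorm v.
Proof. by rewrite -scaleN1r enormZ normrN normr1 mul1r. Qed.

Lemma enormB u v : enorm (u - v) = enorm (v - u).
Proof. by rewrite -enormN opprB. Qed.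

Lemma CS u v : \sum_(i < D) u ord0 i * v ord0 i <= enorm u * enorm v.
Proof.
set A := enorm u; set B := enorm v.
have H : \sum_(i < D) (2 * (A * B) * (u ord0 i * v ord0 i)) <=
         \sum_(i < D) (B ^+ 2 * u ord0 i ^+ 2 + A ^+ 2 * v ord0 i ^+ 2).
  apply: ler_sum => i _; have := sqr_ge0 (u ord0 i * B - v ord0 i * A); nra.
move: H; rewrite -mulr_sumr big_split /= -!mulr_sumr -!enorm_sq -/A -/B => H.
have A0 : 0 <= A := enorm_ge0 u.
have B0 : 0 <= B := enorm_ge0 v.
have [AB0|] := ltrP 0 (A * B).
  rewrite -(ler_pM2l (_ : 0 < 2 * (A * B))); last by lra.
  nra.
move=> AB0.
have : A * B = 0 by apply/eqP; rewrite eq_le AB0 mulr_ge0.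
move/eqP; rewrite mulf_eq0 => /orP[] /eqP Z.
  have : \sum_(i < D) u ord0 i ^+ 2 = 0 by rewrite -enorm_sq -/A Z expr0n.
  move/eqP; rewrite psumr_eq0; last by move=> i _; apply: sqr_ge0.
  move/allP => Hu; rewrite Z mul0r big1 // => i _.
  by have /implyP/(_ isT) := Hu i (mem_index_enum _); rewrite sqrf_eq0 => /eqP ->; rewrite mul0r.
have : \sum_(i < D) v ord0 i ^+ 2 = 0 by rewrite -enorm_sq -/B Z expr0n.
move/eqP; rewrite psumr_eq0; last by move=> i _; apply: sqr_ge0.
move/allP => Hu; rewrite Z mulr0 big1 // => i _.
by have /implyP/(_ isT) := Hu i (mem_index_enum _); rewrite sqrf_eq0 => /eqP ->; rewrite mulr0.
Qed.

Lemma enormD u v : enorm (u + v) <= enorm u + enorm v.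
Proof.
have A0 := enorm_ge0 u; have B0 := enorm_ge0 v.
rewrite -(ler_pXn2r (_ : (0 < 2)%N)) ?nnegrE ?addr_ge0 ?enorm_ge0 //.
rewrite enorm_sq.
have -> : \sum_(i < D) (u + v) ord0 i ^+ 2 =
  \sum_(i < D) u ord0 i ^+ 2 + \sum_(i < D) v ord0 i ^+ 2 + 2 * \sum_(i < D) u ord0 i * v ord0 i.
  rewrite mulr_sumr -!big_split /=; apply: eq_bigr => i _; rewrite mxE; ring.
rewrite -!enorm_sq; have := CS u v; nra.
Qed.


Lemma coord_le_norm v i : `|v ord0 i| <= `|v|.
Proof.
have -> : `|v| = mx_norm v by []. rewrite mx_normrE.
by apply: (le_bigmax _ _ (ord0, i)).
Qed.

Lemma enorm_le_norm v : enorm v <= D%:R * `|v|.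
Proof.
rewrite -(ler_pXn2r (_ : (0 < 2)%N)) ?nnegrE ?mulr_ge0 ?enorm_ge0 //.
rewrite enorm_sq.
apply: (@le_trans _ _ (\sum_(i < D) `|v| ^+ 2)).
  apply: ler_sum => i _; rewrite -real_normK ?num_real //.
  by rewrite lerXn2r ?nnegrE // coord_le_norm.
rewrite sumr_const card_ord exprMn.
have -> : `|v| ^+ 2 *+ D = D%:R * `|v| ^+ 2 by rewrite mulr_natl.
apply: ler_wpM2r; first exact: sqr_ge0.
have : (D <= D * D)%N by case: (D) => // n; rewrite leq_pmulr.
by rewrite expr2 -natrM ler_nat.
Qed.

Lemma dist_le (M : set 'rV[R]_D) x p : M p -> dist_set x M <= enorm (x - p).
Proof.
move=> Mp; apply: ge_inf; last by exists p.
by exists 0 => _ [q _ <-]; apply: enorm_ge0.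
Qed.

Lemma dist_ge0 (M : set 'rV[R]_D) x : M !=set0 -> 0 <= dist_set x M.
Proof.
move=> [p Mp]; apply: lb_le_inf; first by exists (enorm (x - p)), p.
by move=> _ [q _ <-]; apply: enorm_ge0.
Qed.

Lemma dist_lip (M : set 'rV[R]_D) x y : M !=set0 ->
  dist_set x M <= dist_set y M + enorm (x - y).
Proof.
move=> [p0 Mp0].
rewrite -lerBlDr; apply: lb_le_inf; first by exists (enorm (y - p0)), p0.
move=> _ [q Mq <-]; rewrite lerBlDr.
apply: (le_trans (@dist_le M x q Mq)).
have -> : x - q = (y - q) + (x - y) by rewrite [RHS]addrC addrA subrK.
exact: enormD.
Qed.

Lemma deriv_approx (X : R -> 'rV[R]_D) (t : R) v : is_derive t 1 X v ->
  forall d, 0 < d -> exists2 rho, 0 < rho &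
    forall h, 0 < h < rho -> enorm (X (t + h) - X t - h *: v) <= d * h.
Proof.
move=> [dX dv] d d0.
have cv : (fun h : R => h^-1 *: ((X \o shift t) (h *: 1) - X t)) @ 0^' --> v.
  by rewrite -dv; exact: dX.
have D1 : 0 < D%:R + 1 :> R by have := ler0n R D; lra.
have e0 : 0 < d / (D%:R + 1) by apply: divr_gt0.
have := cvgr_dist_lt _ _ cv _ e0.
rewrite near_withinE => H0.
have {H0} := H0 (dnbhs_filter _).
case/nbhs_ballP => rho rho0 Hr.
exists rho => // h /andP[h0 hr].
have hb : ball 0 rho h by rewrite /ball /= sub0r normrN gtr0_norm.
have := Hr h hb (lt0r_neq0 h0); rewrite /= /shift.
rewrite [h *: 1]/(_ *: _) /= mulr1 [h + t]addrC => H.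
have -> : X (t + h) - X t - h *: v = - (h *: (v - h^-1 *: (X (t + h) - X t))).
  rewrite scalerBr scalerA mulfV ?lt0r_neq0 // scale1r opprB; by [].
rewrite enormN enormZ gtr0_norm //.
rewrite mulrC ler_pM2r //.
apply: (le_trans (enorm_le_norm _)).
apply: (@le_trans _ _ ((D%:R + 1) * `|v - h^-1 *: (X (t + h) - X t)|)).
  by apply: ler_wpM2r; [exact: normr_ge0 | rewrite lerDl].
rewrite -ler_pdivlMl //.
by rewrite mulrC; apply: ltW.
Qed.

Lemma cont_approx (A : set R) (X : R -> 'rV[R]_D) :
  {within A, continuous X} -> forall t : R, A t -> forall eta : R, 0 < eta ->
  exists2 rho : R, 0 < rho & forall u : R, A u -> `|u - t| < rho -> enorm (X u - X t) < eta.
Proof.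
move=> HX t At eta eta0.
have cv := (@subspace_continuousP _ A _ X).1 HX t At.
have D1 : 0 < D%:R + 1 :> R by have := ler0n R D; lra.
have e0 : 0 < eta / (D%:R + 1) by apply: divr_gt0.
have := cvgr_dist_lt _ _ cv _ e0.
rewrite near_withinE => H0.
have {H0} := H0 (within_filter _ _).
move=> H1; have [rho rho0 Hr] := (@nbhs_ballP R R^o t _).1 (H1 (nbhs_filter t)).
exists rho => // u Au ut.
have hb : ball t rho u by rewrite /ball /= distrC.
have H := Hr u hb Au; rewrite /= in H.
apply: (le_lt_trans (enorm_le_norm _)).
apply: (@le_lt_trans _ _ ((D%:R + 1) * `|X t - X u|)).
  rewrite -normrN opprB.
  by apply: ler_wpM2r; [exact: normr_ge0 | rewrite lerDl].
by rewrite mulrC -ltr_pdivlMr.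
Qed.

Lemma enorm0 : enorm (0 : 'rV[R]_D) = 0.
Proof. by rewrite /enorm big1 ?sqrtr0 // => i _; rewrite mxE expr0n. Qed.

Lemma step_est (x p e w : 'rV[R]_D) (s h eps dd d : R) :
  0 < s -> 0 < h -> h <= 2 * s -> enorm (x - p) = dd -> enorm e <= eps ->
  enorm (w - x - h *: (2^-1 *: (- (s^-1 *: (x - p)) + s^-1 *: e))) <= d * h ->
  enorm (w - p) <= (1 - h / (2 * s)) * dd + h / (2 * s) * eps + d * h /\
  enorm (w - x) <= h / (2 * s) * (dd + eps) + d * h.
Proof.
move=> s0 h0 hs xp ee H.
set c := h / (2 * s).
have c0 : 0 <= c by apply: divr_ge0; lra.
have c1 : c <= 1 by rewrite ler_pdivrMr; lra.
have hv : h *: (2^-1 *: (- (s^-1 *: (x - p)) + s^-1 *: e)) =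
          - (c *: (x - p)) + c *: e.
  rewrite scalerA scalerDr scalerN !scalerA /c invfM; congr (- (_ *: _) + _ *: _); ring.
rewrite hv in H.
have dd0 : 0 <= dd by rewrite -xp enorm_ge0.
have e0 : 0 <= enorm e := enorm_ge0 e.
set q := - (c *: (x - p)) + c *: e.
have Hq : (x - p) + q = (1 - c) *: (x - p) + c *: e by rewrite scalerBl scale1r addrA.
have eZ := enormZ.
split.
  have -> : w - p = (w - x - q) + ((x - p) + q).
    by rewrite [_ + q]addrC addrA subrK addrA subrK.
  apply: (le_trans (enormD _ _)); rewrite Hq.
  have := enormD ((1 - c) *: (x - p)) (c *: e).
  rewrite !enormZ xp (ger0_norm c0) ger0_norm; last lra.
  have : c * enorm e <= c * eps by apply: ler_wpM2l.
  lra.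
have -> : w - x = (w - x - q) + q by rewrite subrK.
apply: (le_trans (enormD _ _)).
have := enormD (- (c *: (x - p))) (c *: e).
rewrite enormN !enormZ xp (ger0_norm c0).
have : c * enorm e <= c * eps by apply: ler_wpM2l.
rewrite mulrDr; rewrite -/q.
lra.
Qed.

End Enorm.

Lemma ln_le_sub1 (R : realType) (y : R) : 0 < y -> ln y <= y - 1.
Proof.
move=> y0; have := expR_ge1Dx (ln y); rewrite lnK ?posrE //; lra.
Qed.

Lemma ln_step (R : realType) (s h : R) : 0 < h -> h < s -> ln (s - h) <= ln s - h / s.
Proof.
move=> h0 hs.
have s0 : 0 < s by lra.
have -> : s - h = s * ((s - h) / s) by rewrite mulrCA divff ?mulr1 // gt_eqF.
rewrite lnM ?posrE //; last by apply: divr_gt0; lra.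
have hp : 0 < (s - h) / s by apply: divr_gt0; lra.
have := @ln_le_sub1 R _ hp.
have -> : (s - h) / s - 1 = - (h / s) by rewrite mulrBl divff ?gt_eqF //; lra.
move=> H; lra.
Qed.


Lemma max_mono (R : realType) (a b c eta : R) :
  a <= b + eta -> 0 <= eta -> Num.max a c <= Num.max b c + eta.
Proof.
move=> H e0; have hb : b <= Num.max b c by rewrite le_max lexx.
have hc : c <= Num.max b c by rewrite le_max lexx orbT.
rewrite ge_max; apply/andP; split; lra.
Qed.

Unset Implicit Arguments.

Theorem lemmaG1 (R : realType) :
  exists C : R,
  forall (D : nat) (M : set 'rV[R]_D) (proj : 'rV[R]_D -> 'rV[R]_D)
    (tau t0 r eps : R) (shat e : 'rV[R]_D -> R -> 'rV[R]_D) (X : R -> 'rV[R]_D),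
  closed M -> embedded_submanifold M ->
  (forall x, tube M r x -> M (proj x) /\ enorm (x - proj x) = dist_set x M) ->
  0 < tau -> tau < t0 ->
  (r%:E < reach M)%E ->
  (forall t x, tau <= t <= t0 -> tube M r x ->
     shat x t = - (t^-1 *: (x - proj x)) + t^-1 *: e x t) ->
  (forall t x, tau <= t <= t0 -> tube M r x -> enorm (e x t) <= eps) ->
  (forall b, (forall t x, tau <= t <= t0 -> tube M r x -> enorm (e x t) <= b) ->
     eps <= b) ->
  {within [set t | 0 <= t <= t0 - tau], continuous X} ->
  (forall t, 0 < t < t0 - tau ->
     is_derive t 1 X (2^-1 *: shat (X t) (t0 - t))) ->
  tube M r (X 0) ->
  eps <= Num.sqrt (2^-1 * dist_set (X 0) M ^+ 2) ->
  enorm (X (t0 - tau) - X 0) <= dist_set (X 0) M + C * (eps * ln (t0 / tau)).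
Proof.
exists 1 => D M proj tau t0 r eps shat e X Mcl Mman Hproj tau0 taut0 Hreach
  Hshat He Heps_inf Xcont Xder X0tube Heps.
rewrite mul1r.
set T := t0 - tau.
have T0 : 0 < T by rewrite /T; lra.
have Tdef : T = t0 - tau by [].
have tpos0 : 0 < t0 by lra.
set d0 := dist_set (X 0) M.
have Mne : M !=set0 by exists (proj (X 0)); case: (Hproj _ X0tube).
have tautau : tau <= tau <= t0 by rewrite lexx ltW.
have eps0 : 0 <= eps.
  by have := He tau (X 0) tautau X0tube; apply: le_trans; apply: enorm_ge0.
have d00 : 0 <= d0 := @dist_ge0 R D M (X 0) Mne.
have epsd0 : eps <= d0.
  apply: (le_trans Heps); rewrite -(ger0_norm d00) -sqrtr_sqr /d0.
  by apply: ler_wsqrtr; have := sqr_ge0 d0; lra.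
have d0r : d0 < r := X0tube.
pose A := [set t : R | 0 <= t <= T].
have Xc := cont_approx Xcont.
have A0 : A 0 by rewrite /A /= lexx ltW.
pose f1 t := Num.max (dist_set (X t) M) eps.
have f10 : f1 0 = d0 by rewrite /f1 max_l.
have dd0 : 0 < (r - d0) / (T + 1) by apply: divr_gt0; lra.
have stage1 : forall u, 0 <= u <= T -> f1 u <= f1 0.
  apply: (@dini_mono R 0 T ((r - d0) / (T + 1)) f1 (ltW T0) dd0).
  - move=> t /andP[t0' tT] eta eta0.
    have At : A t by rewrite /A /= tT ltW.
    have [rho rho0 Hr] := Xc t At eta eta0.
    exists rho => // u /andP[u0 ut] tur.
    have Au : A u by rewrite /A /= u0 /=; lra.
    have := Hr u Au ltac:(rewrite distrC ger0_norm; lra).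
    have := @dist_lip R D M (X t) (X u) Mne.
    rewrite enormB => H1 H2.
    apply: max_mono; lra.
  - move=> eta eta0.
    have [rho rho0 Hr] := Xc 0 A0 eta eta0.
    exists rho => // u /andP[u0 uT] ur.
    have Au : A u by rewrite /A /= u0 uT.
    have := Hr u Au ltac:(rewrite subr0 ger0_norm //).
    have := @dist_lip R D M (X u) (X 0) Mne.
    move=> H1 H2.
    apply: max_mono; lra.
  - move=> dl dl0 dlt t /andP[tpos tT] P.
    have Pt := P t ltac:(by rewrite (ltW tpos) lexx).
    rewrite f10 subr0 in Pt.
    have dXt : dist_set (X t) M < r.
      have h1 : dist_set (X t) M <= f1 t by rewrite /f1 le_max lexx.
      have h2 : dl * (T + 1) < r - d0 by rewrite -ltr_pdivlMr //; lra.
      have h3 : dl * t <= dl * T by apply: ler_wpM2l; lra.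
      have h4 : dl * (T + 1) = dl * T + dl by rewrite mulrDr mulr1.
      lra.
    set s := t0 - t.
    have s0 : 0 < s by rewrite /s; lra.
    have ss : tau <= s <= t0 by apply/andP; split; rewrite /s; lra.
    have [Mp dd] := Hproj (X t) dXt.
    have Hv := Xder t ltac:(by rewrite tpos tT).
    rewrite (Hshat s (X t) ss dXt) in Hv.
    have [rho rho0 Hr] := deriv_approx Hv dl dl0.
    exists (Num.min rho s); first by rewrite lt_min rho0 s0.
    move=> h /andP[h0]; rewrite lt_min => /andP[hr hs].
    have [H1 _] := @step_est R D (X t) (proj (X t)) (e (X t) s) (X (t + h)) s h eps (dist_set (X t) M) dl s0 h0 ltac:(lra) dd (He s (X t) ss dXt)
      (Hr h ltac:(by rewrite h0 hr)).
    have H3 := @dist_le R D M (X (t + h)) _ Mp.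
    set c := h / (2 * s) in H1.
    have c0 : 0 <= c by apply: divr_ge0; lra.
    have c1 : c <= 1 by rewrite ler_pdivrMr; lra.
    have m1 : dist_set (X t) M <= f1 t by rewrite /f1 le_max lexx.
    have m2 : eps <= f1 t by rewrite /f1 le_max lexx orbT.
    have k1 : (1 - c) * dist_set (X t) M <= (1 - c) * f1 t by apply: ler_wpM2l; lra.
    have k2 : c * eps <= c * f1 t by apply: ler_wpM2l.
    have k3 : (1 - c) * f1 t + c * f1 t = f1 t by ring.
    have hd : 0 <= dl * h by apply: mulr_ge0; lra.
    rewrite {1}/f1 ge_max; apply/andP; split; first lra.
    lra.
have inT : forall u, 0 <= u <= T -> dist_set (X u) M < r.
  move=> u uT; have := stage1 u uT; rewrite f10.
  have : dist_set (X u) M <= f1 u by rewrite /f1 le_max lexx.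
  lra.
pose f2 t := enorm (X t - X 0) + dist_set (X t) M + eps * ln (t0 - t).
have stage2 : forall u, 0 <= u <= T -> f2 u <= f2 0.
  apply: (@dini_mono R 0 T 1 f2 (ltW T0) ltr01).
  - move=> t /andP[t0' tT] eta eta0.
    have At : A t by rewrite /A /= tT ltW.
    have [rho rho0 Hr] := Xc t At (eta / 2) ltac:(by apply: divr_gt0).
    exists rho => // u /andP[u0 ut] tur.
    have Au : A u by rewrite /A /= u0 /=; lra.
    have := Hr u Au ltac:(rewrite distrC ger0_norm; lra).
    have := @dist_lip R D M (X t) (X u) Mne.
    have := enormD (X t - X u) (X u - X 0).
    rewrite addrA subrK enormB => H0 H1 H2.
    have : eps * ln (t0 - t) <= eps * ln (t0 - u).
      by apply: ler_wpM2l => //; rewrite ler_ln ?posrE; lra.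
    rewrite /f2; lra.
  - move=> eta eta0.
    have [rho rho0 Hr] := Xc 0 A0 (eta / 2) ltac:(by apply: divr_gt0).
    exists rho => // u /andP[u0 uT] ur.
    have Au : A u by rewrite /A /= u0 uT.
    have := Hr u Au ltac:(rewrite subr0 ger0_norm //).
    have := @dist_lip R D M (X u) (X 0) Mne.
    rewrite /f2 subrr enorm0 subr0.
    have : eps * ln (t0 - u) <= eps * ln t0.
      by apply: ler_wpM2l => //; rewrite ler_ln ?posrE; lra.
    lra.
  - move=> dl dl0 dlt t /andP[tpos tT] _.
    have dXt : dist_set (X t) M < r by apply: inT; rewrite (ltW tpos) (ltW tT).
    set s := t0 - t.
    have s0 : 0 < s by rewrite /s; lra.
    have ss : tau <= s <= t0 by apply/andP; split; rewrite /s; lra.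
    have [Mp dd] := Hproj (X t) dXt.
    have Hv := Xder t ltac:(by rewrite tpos tT).
    rewrite (Hshat s (X t) ss dXt) in Hv.
    have dl2 : 0 < dl / 2 by apply: divr_gt0.
    have [rho rho0 Hr] := deriv_approx Hv (dl / 2) dl2.
    exists (Num.min rho s); first by rewrite lt_min rho0 s0.
    move=> h /andP[h0]; rewrite lt_min => /andP[hr hs].
    have [H1 H2] := @step_est R D (X t) (proj (X t)) (e (X t) s) (X (t + h)) s h eps (dist_set (X t) M) (dl / 2) s0 h0 ltac:(lra) dd (He s (X t) ss dXt)
      (Hr h ltac:(by rewrite h0 hr)).
    have H3 := @dist_le R D M (X (t + h)) _ Mp.
    have H4 := enormD (X (t + h) - X t) (X t - X 0).
    rewrite addrA subrK in H4.
    have H5 : ln (t0 - (t + h)) <= ln s - h / s.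
      by rewrite opprD addrA; apply: ln_step.
    have H6 : eps * ln (t0 - (t + h)) <= eps * (ln s - h / s) by apply: ler_wpM2l.
    set c := h / (2 * s) in H1 H2.
    have e1 : eps * (ln s - h / s) = eps * ln s - 2 * (c * eps).
      by rewrite /c mulrBr; congr (_ - _); field; lra.
    have e2 : c * (dist_set (X t) M + eps) = c * dist_set (X t) M + c * eps by ring.
    have e3 : (1 - c) * dist_set (X t) M = dist_set (X t) M - c * dist_set (X t) M by ring.
    have e4 : dl / 2 * h + dl / 2 * h = dl * h by field.
    rewrite /f2 -/s; lra.
have := stage2 T ltac:(by rewrite lexx ltW).
rewrite /f2 subrr enorm0 subr0.
have -> : t0 - T = tau by rewrite /T; ring.
have -> : ln (t0 / tau) = ln t0 - ln tau.
  by rewrite lnM ?posrE ?invr_gt0 ?lnV ?posrE //; lra.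
have : 0 <= dist_set (X T) M by apply: (@dist_ge0 R D M).
have -> : eps * (ln t0 - ln tau) = eps * ln t0 - eps * ln tau by ring.
lra.
Qed.
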